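(* Let $T$ be a non-abelian finite simple group, $s\in\pi(T)$, $E$ a perfect central extension of $T$ with $Z(E)$ of order coprime to $s$, and $S$ a (possibly trivial) $s$-group. Let $G$ be a finite perfect group having a central subgroup $Z$ of order coprime to $s$ such that $G/Z$ has a normal subgroup isomorphic to $S$ with corresponding quotient isomorphic to $E$. Assume that no subgroup of $G$ having $E$ as a section contains a central element of order $s$. Then there is a subgroup $H\le G$ with a normal $s$-subgroup $\hat S$ such that $H/\hat S\cong\hat E$ for a perfect central extension $\hat E$ of $T$ having $E$ as a section.
   Context: All groups are finite. A perfect central extension of $T$ is a perfect group $E$ with $E/Z(E)\cong T$. A section of a group is a quotient of a subgroup. *)

(* Defs.v *)
From mathcomp Require Import all_boot all_fingroup all_solvable.
Set Implicit Arguments.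
Unset Strict Implicit.
Unset Printing Implicit Defensive.
Local Open Scope group_scope.

Definition perfect (gT : finGroupType) (G : {set gT}) : Prop := G^`(1) = G.

Definition perfect_central_ext (eT tT : finGroupType)
  (E : {group eT}) (T : {group tT}) : Prop :=
  perfect E /\ (E / 'Z(E)) \isog T.

Definition is_section_of (gT eT : finGroupType) (E : {group eT}) (K : {set gT}) : Prop :=
  exists (A B : {group gT}), [/\ A \subset K, B <| A & (A / B) \isog E].

(* Main.v *)
Require Import Defs.
From mathcomp Require Import all_boot all_fingroup all_solvable.
Local Open Scope group_scope.
Set Implicit Arguments.

Lemma isog_quo_center (aT rT : finGroupType) (A : {group aT}) (B : {group rT}) :
  A \isog B -> (A / 'Z(A)) \isog (B / 'Z(B)).
Proof.
case/isogP=> f injf fA.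
have eZ : f @* 'Z(A) = 'Z(B) by rewrite injm_center // fA.
suff: A / 'Z(A) \isog f @* A / f @* 'Z(A) by rewrite eZ fA.
apply/isogP; exists (quotm_morphism f (center_normal A)).
  exact: injm_quotm.
by rewrite morphim_quotm.
Qed.

Lemma pce_lift (gT eT tT : finGroupType) (X Y : {group gT}) (E : {group eT}) (T : {group tT}) :
  perfect X -> Y \subset 'Z(X) -> (X / Y) \isog E -> perfect_central_ext E T ->
  perfect_central_ext X T.
Proof.
move=> pX sYZ isoE [pE isoT].
have nsYX := sub_center_normal sYZ.
have [sYX nYX] := andP nsYX.
have cYX : Y \subset 'C(X) by apply: subset_trans sYZ (subsetIr _ _).
set C := coset Y @*^-1 'Z(X / Y).
have sCX : C \subset X by rewrite sub_cosetpre_quo // center_sub.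
have nYC : C \subset 'N(Y) by apply: subset_trans sCX nYX.
have sCXY : [~: C, X] \subset Y.
  rewrite -quotient_sub1; last by apply: subset_trans nYX; exact: comm_subG.
  rewrite quotientR // cosetpreK.
  have /commG1P -> : 'Z(X / Y) \subset 'C(X / Y) by exact: subsetIr.
  by [].
have c1 : [~: X, C, X] :=: 1.
  apply/commG1P; apply: subset_trans cYX; by rewrite commGC.
have c2 : [~: C, X, X] :=: 1.
  by apply/commG1P; apply: subset_trans cYX.
have c3 := three_subgroup c1 c2.
have cXC : [~: X, C] = 1 by rewrite -c3; congr [~: _, _]; rewrite -[LHS]pX.
have sCZ : C \subset 'Z(X).
  by rewrite subsetI sCX centsC; apply/commG1P.
have eZ : 'Z(X / Y) = 'Z(X) / Y.
  apply/eqP; rewrite eqEsubset morphim_center andbT.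
  by rewrite -{1}(cosetpreK 'Z(X / Y)) quotientS.
split=> //.
have nsZX := center_normal X.
have h1 : X / 'Z(X) \isog X / Y / 'Z(X / Y).
  rewrite isog_sym eZ; exact: third_isog.
have h2 := @isog_quo_center _ _ (X / Y)%G E isoE.
exact: isog_trans h1 (isog_trans h2 isoT).
Qed.
Unset Implicit Arguments.
Theorem lemma1p16
  (tT eT sT gT : finGroupType)
  (T : {group tT}) (s : nat) (E : {group eT}) (S : {group sT})
  (G : {group gT}) (Z : {group gT})
  (simT : simple T) (nabT : ~~ abelian T) (sT_pi : s \in \pi(T))
  (extE : perfect_central_ext E T) (copZE : coprime #|'Z(E)| s)
  (sgS : s.-group S)
  (perfG : perfect G) (cZG : Z \subset 'Z(G)) (copZ : coprime #|Z| s)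
  (quo : exists N : {group coset_of Z},
           [/\ N <| G / Z, N \isog S & (G / Z) / N \isog E])
  (noc : forall K : {group gT}, K \subset G -> is_section_of E K ->
           ~ (exists z, z \in 'Z(K) /\ #[z] = s)) :
  exists (H Sh : {group gT}) (hT : finGroupType) (Eh : {group hT}),
    [/\ H \subset G, Sh <| H & s.-group Sh] /\
    [/\ (H / Sh) \isog Eh, perfect_central_ext Eh T & is_section_of E Eh].
Proof.
case: quo => N [nsNG isoNS isoE].
have nsZG := sub_center_normal cZG.
have [sZG nZG] := andP nsZG.
set M := (coset Z @*^-1 N)%G.
have MZ : M / Z = N by rewrite cosetpreK.
have sZM : Z \subset M by exact: sub_cosetpre.
have nsMG : M <| G.
  rewrite -(quotientGK nsZG) /M morphpre_normal //.
    exact: subset_trans (normal_sub nsNG) (quotientS _ (normal_norm nsZG)).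
  exact: quotientS.
have [sMG nMG] := andP nsMG.
have pN : s.-group N by rewrite (isog_pgroup _ isoNS).
have cZM : Z \subset 'Z(M).
  rewrite subsetI sZM; apply: subset_trans cZG _.
  by apply: subset_trans (subsetIr _ _) (centS sMG).
have nilM : nilpotent M.
  rewrite -quotient_center_nil.
  have nsZM : Z <| M := sub_center_normal cZM.
  have i1 := third_isog cZM nsZM (center_normal M).
  rewrite -(isog_nil i1); apply: quotient_nil.
  apply: (pgroup_nil (p:=s)); by rewrite /= MZ.
set P := 'O_s(M)%G.
set Q := 'O_s^'(M)%G.
have dPQ := nilpotent_pcoreC s nilM.
have sQM : Q \subset M := pcore_sub _ _.
have sQZ : Q \subset Z.
  have nZQ : Q \subset 'N(Z) := subset_trans sQM (subset_trans sMG nZG).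
  rewrite -quotient_sub1 //.
  have p1 : s.-group (Q / Z) by apply: pgroupS pN; rewrite -MZ quotientS.
  have p2 : s^'.-group (Q / Z) by apply: quotient_pgroup; exact: pcore_pgroup.
  by rewrite subG1 trivg_card1 (pnat_1 p1 p2).
have nsPG : P <| G := char_normal_trans (pcore_char _ _) nsMG.
have sPM : P \subset M := pcore_sub _ _.
have MZg : (M / Z)%G = N by apply: val_inj.
have iGM : G / M \isog E.
  have i1 := isog_symr (third_isog sZM nsZG nsMG).
  rewrite MZ in i1; exact: isog_trans i1 isoE.
have iE : (G / P) / (M / P) \isog E := isog_trans (third_isog sPM nsPG nsMG) iGM.
exists G, P, _, (G / P)%G; split.
  by split=> //; exact: pcore_pgroup.
split.
- exact: isog_refl.
- apply: (@pce_lift _ _ _ (G / P)%G (M / P)%G E T) => //.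
    by rewrite /perfect -quotient_der ?perfG // (normal_norm nsPG).
  change (M / P \subset 'Z(G / P)).
  have -> : M / P = Q / P by rewrite -{1}(dprodW dPQ) quotientMidl.
  apply: subset_trans (quotientS _ (subset_trans sQZ cZG)) (morphim_center _ _).
- exists (G / P)%G, (M / P)%G; split=> //.
  exact: quotient_normal.
Qed.
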